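(* For a barcode $f$ with $n \ge 1$ bars, $\Delta(f^{\wedge p})$ for any integer $p \ge 1$ can be obtained from $n$ and $C(f^{\wedge n})$: if $f, f'$ are barcodes both with exactly $n\ge1$ bars and $C(f^{\wedge n}) = C(f'^{\wedge n})$, then $\Delta(f^{\wedge p}) = \Delta(f'^{\wedge p})$ for all $p\ge1$.
   Context: A barcode is a finite formal sum $f = \sum_{i=1}^n x^{\alpha_i}y^{\ell_i}$ with $\alpha_i \in \mathbb{R}$, $\ell_i \in \mathbb{R}_{>0}$ (a multiset of $n$ bars). Its $p$-th exterior power ($p\ge1$) is $f^{\wedge p} = \sum_{1\le i_1<\cdots<i_p\le n} x^{\alpha_{i_1}+\cdots+\alpha_{i_p}}y^{\min\{\ell_{i_1},\ldots,\ell_{i_p}\}}$ (zero if $p>n$). The critical series is $C(f) = \sum_i x^{\alpha_i} - \sum_i x^{\alpha_i+\ell_i}$ (a finite integer combination of symbols $x^g$, $g\in\mathbb{R}$), and the drift is $\Delta(f) = \sum_{i=1}^n \alpha_i$. *)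

(* Defs.v *)
From HB Require Import structures.
From mathcomp Require Import all_boot all_order all_algebra.
From mathcomp Require Import reals.
Set Implicit Arguments. Unset Strict Implicit. Unset Printing Implicit Defensive.
Import Order.TTheory GRing.Theory Num.Theory.
Local Open Scope ring_scope.

Section Barcodes.
Variable R : realType.

(* A barcode sum_i x^{alpha_i} y^{l_i} is represented by the finite sequence
   (a multiset, order irrelevant) of its bars (alpha_i, l_i). *)
Definition barcode := seq (R * R).

Definition wf_barcode (f : barcode) : bool := all (fun b => 0 < b.2) f.

Definition seqmin (s : seq R) : R := \big[Num.min/head 0 s]_(x <- s) x.

(* p-th exterior power: one bar for each p-element subset S of the index set,
   with position sum_{i in S} alpha_i and length min_{i in S} l_i.
   (For p > size f the index set is empty, i.e. the result is zero.) *)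
Definition ext_pow (p : nat) (f : barcode) : barcode :=
  [seq (\sum_(i in A) (nth (0, 0) f i).1,
        seqmin [seq (nth (0, 0) f i).2 | i : 'I_(size f) <- enum A])
  | A : {set 'I_(size f)} <- enum [set S : {set 'I_(size f)} | #|S| == p]].

(* Critical series C(f) = sum_i x^{alpha_i} - sum_i x^{alpha_i + l_i},
   a finite formal Z-combination of symbols x^g, represented by its
   coefficient function g |-> coefficient of x^g. *)
Definition crit (f : barcode) : R -> int := fun g =>
  (count (fun b => b.1 == g) f)%:Z - (count (fun b => b.1 + b.2 == g) f)%:Z.

Definition drift (f : barcode) : R := \sum_(b <- f) b.1.

End Barcodes.

(* Main.v *)
Require Import Defs.
From HB Require Import structures.
From mathcomp Require Import all_boot all_order all_algebra.
From mathcomp Require Import reals.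
From mathcomp Require Import fingroup perm.
Import Order.TTheory GRing.Theory Num.Theory.
Local Open Scope ring_scope.

Section S.
Variable R : realType.

Definition cnt (m p i0 : nat) : nat :=
  #|[set A : {set 'I_m} | (#|A| == p) && [exists x in A, val x == i0]]|.

Lemma cnt_perm m p (i j : 'I_m) :
  (#|[set A : {set 'I_m} | (#|A| == p) && (i \in A)]| <=
   #|[set A : {set 'I_m} | (#|A| == p) && (j \in A)]|)%N.
Proof.
pose g := fun A : {set 'I_m} => [set tperm i j x | x in A].
have ginj : injective g by apply: imset_inj; exact: perm_inj.
rewrite -(card_imset _ ginj); apply: subset_leq_card.
apply/subsetP => B /imsetP [A]; rewrite !inE => /andP [/eqP hA hiA] ->.
rewrite /g card_imset; last exact: perm_inj.
rewrite hA eqxx /=; apply/imsetP; exists i => //; by rewrite tpermL.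
Qed.

Lemma cnt_const m p (i : 'I_m) :
  #|[set A : {set 'I_m} | (#|A| == p) && (i \in A)]| = cnt m p 0.
Proof.
case: m i => [|m] i; first by case: i.
rewrite /cnt.
have -> : [set A : {set 'I_m.+1} | (#|A| == p) && [exists x in A, val x == 0%N]]
        = [set A : {set 'I_m.+1} | (#|A| == p) && (ord0 \in A)].
  apply/setP => A; rewrite !inE; congr (_ && _).
  apply/existsP/idP => [[x /andP [xA /eqP x0]]|h].
    by have -> : ord0 = x by apply: val_inj.
  by exists ord0; rewrite h.
by apply/eqP; rewrite eqn_leq !cnt_perm.
Qed.

Lemma drift_ext (p : nat) (f : barcode R) :
  drift (ext_pow p f) = ((cnt (size f) p 0)%:R * drift f).
Proof.
rewrite /drift /ext_pow big_map big_enum /=.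
pose a := fun i : 'I_(size f) => (nth (0, 0) f i).1.
have -> : \sum_(b <- f) b.1 = \sum_(i < size f) a i.
  by rewrite (big_nth (0,0)) big_mkord.
under eq_bigr do rewrite big_mkcond /=.
rewrite exchange_big /= mulr_sumr; apply: eq_bigr => i _.
rewrite -big_mkcondr /= sumr_const -(@cnt_const _ p i) mulr_natl.
rewrite /a; congr (_ *+ _); rewrite -[RHS]cardsE; apply: eq_card => A; rewrite [in LHS]unfold_in !inE; reflexivity.
Qed.

Lemma seqmin_pos (s : seq R) : s != [::] -> all (fun x => 0 < x) s -> 0 < seqmin s.
Proof.
case: s => [//|x s] _ /= /andP [hx hs]; rewrite /seqmin /= big_seq.
apply: (big_ind (fun y => 0 < y)) => //.
  by move=> u v hu hv; rewrite lt_min hu hv.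
by move=> y; rewrite inE => /orP [/eqP ->//|ys]; apply: (allP hs).
Qed.

Lemma ext_top (f : barcode R) : wf_barcode f -> (0 < size f)%N ->
  exists m, 0 < m /\ ext_pow (size f) f = [:: (drift f, m)].
Proof.
move=> wf hn.
have hS : [set S : {set 'I_(size f)} | #|S| == size f] = [set setT].
  apply/setP => S; rewrite !inE eqEcard subsetT /= cardsT card_ord.
  by have := max_card (mem S); rewrite card_ord => h; rewrite eqn_leq h.
rewrite /ext_pow hS enum_set1 /=.
eexists; split; last first.
  congr [:: (_, _)].
  rewrite /drift (big_nth (0,0)) big_mkord; apply: eq_bigl => i; by rewrite inE.
apply: seqmin_pos.
  rewrite -size_eq0 size_map -cardE cardsT card_ord -lt0n //.
apply/allP => x /mapP [i _ ->]; apply: (allP wf); exact: mem_nth.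
Qed.

End S.

Theorem proposition10 (R : realType) (n : nat) (f f' : barcode R) :
  wf_barcode f -> wf_barcode f' ->
  size f = n -> size f' = n -> (1 <= n)%N ->
  crit (ext_pow n f) = crit (ext_pow n f') ->
  forall p : nat, (1 <= p)%N -> drift (ext_pow p f) = drift (ext_pow p f').
Proof.
move=> wf wf' hf hf' hn hc p hp.
rewrite !drift_ext hf hf'.
suff -> : drift f = drift f' by [].
have [m [hm e]] := @ext_top R _ wf (ltac:(by rewrite hf)).
have [m' [hm' e']] := @ext_top R _ wf' (ltac:(by rewrite hf')).
move: hc; rewrite -{1}hf -hf' e e' => /(congr1 (fun c => c (drift f))).
rewrite /crit /= eqxx.
have -> : (drift f + m == drift f) = false.
  by apply/negbTE; rewrite -subr_eq0 addrAC subrr add0r gt_eqF.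
case: eqP => [//|_]; case: (_ == _) => //.
Qed.
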